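(* Let $(F,+,\cdot)$ be a (left) near-field, $I$ an index set, and $\boldsymbol\sigma=(\sigma_i)_{i\in I}$, $\boldsymbol\rho=(\rho_i)_{i\in I}$ families of multiplicative automorphisms of $F$. Define an equivalence relation $\approx$ on $I$ by $i\approx j$ iff there is $\gamma\in F\setminus\{0\}$ such that $\sigma_i\circ\rho_i\circ\varphi_\gamma\circ(\sigma_j\circ\rho_j)^{-1}$ is a near-field automorphism of $(F,+,\cdot)$. Let $\mathcal T$ be a full set of representatives for $\approx$, for $t\in\mathcal T$ let $I_t$ be the class of $t$, $\boldsymbol\sigma_t=(\sigma_i)_{i\in I_t}$, $\boldsymbol\rho_t=(\rho_i)_{i\in I_t}$, and let $\Psi_t:F^{\boldsymbol\sigma_t,\boldsymbol\rho_t}\to F^{\boldsymbol\sigma,\boldsymbol\rho}$ send $(\alpha_i)_{i\in I_t}$ to $(\beta_i)_{i\in I}$ with $\beta_i=\alpha_i$ for $i\in I_t$ and $\beta_i=0$ otherwise. Then $\{\Psi_t(F^{\boldsymbol\sigma_t,\boldsymbol\rho_t})\}_{t\in\mathcal T}$ is a regular decomposition family for $F^{\boldsymbol\sigma,\boldsymbol\rho}$.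
   Context: A (left) near-field is $(F,+,\cdot,0,1)$ where $(F,\cdot,1)$ is a monoid, $(F\setminus\{0\},\cdot)$ is a group, $(F,+,0)$ is an abelian group, and $\alpha(\beta+\gamma)=\alpha\beta+\alpha\gamma$. A multiplicative automorphism is a monoid automorphism of $(F,\cdot)$; a near-field automorphism preserves both $+$ and $\cdot$. For $\tau$ multiplicative, $\alpha+_\tau\beta=\tau^{-1}(\tau(\alpha)+\tau(\beta))$; $\varphi_\gamma(\alpha)=\gamma^{-1}\alpha\gamma$. For families $\boldsymbol\sigma=(\sigma_i)_{i\in J}$, $\boldsymbol\rho=(\rho_i)_{i\in J}$, $F^{\boldsymbol\sigma,\boldsymbol\rho}$ is the set of finitely supported $(\alpha_i)_{i\in J}\in F^J$ with addition $(\alpha_i)+_{\boldsymbol\sigma}(\beta_i)=(\alpha_i+_{\sigma_i}\beta_i)$ and scalar multiplication $\alpha\cdot_{\boldsymbol\rho}(\alpha_i)=(\rho_i(\alpha)\alpha_i)$; it is a near-vector space over $F$. For a near-vector space $V$: the quasi-kernel is $Q(V)=\{u:\forall\alpha,\beta\ \exists\gamma,\ \alpha u+\beta u=\gamma u\}$; a subspace is a nonempty subset closed under addition and scalar multiplication; $u,v\in Q(V)\setminus\{0\}$ are compatible if $u+\lambda v\in Q(V)$ for some $\lambda\in F\setminus\{0\}$; $V$ is regular if any two elements of $Q(V)\setminus\{0\}$ are compatible; a maximal regular subspace is a subspace that is regular (as a near-vector space) and maximal under inclusion among such. A family $\{V_i\}$ of subspaces of $V$ is a regular decomposition family if $V=\bigoplus_i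 V_i$ (internal direct sum) and each $V_i$ is a maximal regular subspace of $V$. *)

(* Defs.v *)
From Stdlib Require Import List ClassicalEpsilon.
Set Implicit Arguments.
Unset Strict Implicit.
Import ListNotations.



Record nearField := NearField {
  nf_car :> Type;
  nf_add : nf_car -> nf_car -> nf_car;
  nf_mul : nf_car -> nf_car -> nf_car;
  nf_zero : nf_car;
  nf_one : nf_car;
  nf_opp : nf_car -> nf_car;
  nf_inv : nf_car -> nf_car;
  nf_addA : forall a b c, nf_add a (nf_add b c) = nf_add (nf_add a b) c;
  nf_addC : forall a b, nf_add a b = nf_add b a;
  nf_add0 : forall a, nf_add nf_zero a = a;
  nf_addN : forall a, nf_add (nf_opp a) a = nf_zero;
  nf_mulA : forall a b c, nf_mul a (nf_mul b c) = nf_mul (nf_mul a b) c;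
  nf_mul1l : forall a, nf_mul nf_one a = a;
  nf_mul1r : forall a, nf_mul a nf_one = a;
  nf_one_neq0 : nf_one <> nf_zero;
  nf_mul_neq0 : forall a b, a <> nf_zero -> b <> nf_zero -> nf_mul a b <> nf_zero;
  nf_inv_neq0 : forall a, a <> nf_zero -> nf_inv a <> nf_zero;
  nf_mulVl : forall a, a <> nf_zero -> nf_mul (nf_inv a) a = nf_one;
  nf_mulVr : forall a, a <> nf_zero -> nf_mul a (nf_inv a) = nf_one;
  nf_mulDr : forall a b c, nf_mul a (nf_add b c) = nf_add (nf_mul a b) (nf_mul a c)
}.

Section NF.
Variable F : nearField.
Local Notation "a + b" := (nf_add a b).
Local Notation "a * b" := (nf_mul a b).
Local Notation "0" := (nf_zero F).
Local Notation "1" := (nf_one F).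

Definition bijective_fun (f : F -> F) : Prop :=
  (forall x y, f x = f y -> x = y) /\ (forall y, exists x, f x = y).

Definition mult_aut (f : F -> F) : Prop :=
  bijective_fun f /\ (forall a b, f (a * b) = f a * f b) /\ f 1 = 1.

Definition nf_aut (f : F -> F) : Prop :=
  bijective_fun f /\ (forall a b, f (a + b) = f a + f b)
  /\ (forall a b, f (a * b) = f a * f b).

(* inverse map (the genuine inverse when f is bijective) *)
Definition finv (f : F -> F) (y : F) : F :=
  epsilon (inhabits 0) (fun x => f x = y).

Definition phi (g : F) (a : F) : F := nf_inv g * a * g.

Definition add_tau (tau : F -> F) (a b : F) : F := finv tau (tau a + tau b).

End NF.

Section NVS.
Variables (F : nearField) (V : Type) (vadd : V -> V -> V) (vzero : V)
          (smul : F -> V -> V).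

Definition quasi_kernel (W : V -> Prop) (u : V) : Prop :=
  W u /\ forall a b : F, exists c : F, vadd (smul a u) (smul b u) = smul c u.

Definition compatible (W : V -> Prop) (u v : V) : Prop :=
  quasi_kernel W u /\ u <> vzero /\ quasi_kernel W v /\ v <> vzero /\
  exists l : F, l <> nf_zero F /\ quasi_kernel W (vadd u (smul l v)).

Definition regular (W : V -> Prop) : Prop :=
  forall u v, quasi_kernel W u -> u <> vzero ->
              quasi_kernel W v -> v <> vzero -> compatible W u v.

Definition subspace (Vc W : V -> Prop) : Prop :=
  (forall v, W v -> Vc v) /\ (exists w, W w) /\
  (forall u v, W u -> W v -> W (vadd u v)) /\
  (forall (a : F) u, W u -> W (smul a u)).

Definition maximal_regular_subspace (Vc W : V -> Prop) : Prop :=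
  subspace Vc W /\ regular W /\
  forall W', subspace Vc W' -> regular W' -> (forall v, W v -> W' v) ->
             forall v, W' v -> W v.

Definition vsum (l : list V) : V := fold_right vadd vzero l.

Definition internal_direct_sum (T : Type) (P : T -> Prop) (Ws : T -> V -> Prop)
    (Vc : V -> Prop) : Prop :=
  (forall v, Vc v <->
     exists l : list (T * V), NoDup (map fst l) /\
       Forall (fun p => P (fst p) /\ Ws (fst p) (snd p)) l /\
       v = vsum (map snd l)) /\
  (forall l : list (T * V), NoDup (map fst l) ->
       Forall (fun p => P (fst p) /\ Ws (fst p) (snd p)) l ->
       vsum (map snd l) = vzero -> Forall (fun p => snd p = vzero) l).

Definition regular_decomposition_family (T : Type) (P : T -> Prop)
    (Ws : T -> V -> Prop) (Vc : V -> Prop) : Prop :=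
  internal_direct_sum P Ws Vc /\
  forall t, P t -> maximal_regular_subspace Vc (Ws t).

End NVS.

Section Fsr.
Variables (F : nearField) (I : Type).

Definition fin_supp (J : Type) (a : J -> F) : Prop :=
  exists s : list J, forall j, a j <> nf_zero F -> In j s.

Definition Fsr_car (a : I -> F) : Prop := fin_supp a.

Definition Fsr_add (sigma : I -> F -> F) (a b : I -> F) : I -> F :=
  fun i => add_tau (sigma i) (a i) (b i).

Definition Fsr_smul (rho : I -> F -> F) (c : F) (a : I -> F) : I -> F :=
  fun i => nf_mul (rho i c) (a i).

Definition Fsr_zero : I -> F := fun _ => nf_zero F.

Definition approx (sigma rho : I -> F -> F) (i j : I) : Prop :=
  exists g : F, g <> nf_zero F /\
    nf_aut (fun x => sigma i (rho i (phi g
              (finv (fun y => sigma j (rho j y)) x)))).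

Definition full_set_of_reps (R : I -> I -> Prop) (Tset : I -> Prop) : Prop :=
  forall i, exists t, (Tset t /\ R i t) /\
                      forall t', Tset t' /\ R i t' -> t' = t.

Definition Psi (sigma rho : I -> F -> F) (t : I)
    (a : {i : I | approx sigma rho i t} -> F) : I -> F :=
  fun i => match excluded_middle_informative (approx sigma rho i t) with
           | left h => a (exist _ i h)
           | right _ => nf_zero F
           end.

Definition Psi_image (sigma rho : I -> F -> F) (t : I) (v : I -> F) : Prop :=
  exists a : {i : I | approx sigma rho i t} -> F,
    fin_supp a /\ v = @Psi sigma rho t a.

End Fsr.

(* Main.v *)
Require Import Defs.
From Stdlib Require Import List ClassicalEpsilon Classical FunctionalExtensionality ProofIrrelevance Lia PropExtensionality.
Import ListNotations.
Set Implicit Arguments.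

Section NFBasics.
Variable F : nearField.
Notation "a <+> b" := (@nf_add F a b) (at level 50, left associativity).
Notation "a <*> b" := (@nf_mul F a b) (at level 40, left associativity).
Notation "'O'" := (@nf_zero F).
Notation "'E'" := (@nf_one F).
Notation "<-> a" := (@nf_opp F a) (at level 35).
Notation iv := (@nf_inv F).

Lemma add0r (a : F) : a <+> O = a.
Proof. rewrite nf_addC; apply nf_add0. Qed.
Lemma addNr (a : F) : a <+> (<-> a) = O.
Proof. rewrite nf_addC; apply nf_addN. Qed.
Lemma add_cancel_l {a b c : F} : a <+> b = a <+> c -> b = c.
Proof.
  intro H. rewrite <- (nf_add0 b), <- (nf_add0 c), <- (nf_addN a), <- !nf_addA, H; reflexivity.
Qed.
Lemma add_cancel_r {a b c : F} : b <+> a = c <+> a -> b = c.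
Proof. rewrite (nf_addC b), (nf_addC c); apply add_cancel_l. Qed.
Lemma mul0r (a : F) : a <*> O = O.
Proof.
  apply (@add_cancel_l (a <*> O)). rewrite <- nf_mulDr, !add0r. reflexivity.
Qed.
Lemma mul1r_inv (a : F) : a <> O -> a <*> iv a = E.
Proof. apply nf_mulVr. Qed.
Lemma mul0l (a : F) : O <*> a = O.
Proof.
  destruct (classic (a = O)) as [->|Ha]. apply mul0r.
  destruct (classic (O <*> a = O)) as [H|H]; auto.
  exfalso. apply (nf_mul_neq0 H (nf_inv_neq0 Ha)).
  rewrite <- nf_mulA, nf_mulVr by auto. rewrite nf_mul1r. reflexivity.
Qed.
Lemma mul_cancel_l {a b c : F} : a <> O -> a <*> b = a <*> c -> b = c.
Proof.
  intros Ha H. rewrite <- (nf_mul1l b), <- (nf_mul1l c), <- (nf_mulVl Ha), <- !nf_mulA, H. reflexivity.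
Qed.
Lemma mul_cancel_r {a b c : F} : a <> O -> b <*> a = c <*> a -> b = c.
Proof.
  intros Ha H. rewrite <- (nf_mul1r b), <- (nf_mul1r c), <- (nf_mulVr Ha), !nf_mulA, H. reflexivity.
Qed.
Lemma mul_eq0 {a b : F} : a <*> b = O -> a = O \/ b = O.
Proof.
  intro H. destruct (classic (a = O)); auto. destruct (classic (b = O)); auto.
  exfalso. exact (nf_mul_neq0 H0 H1 H).
Qed.
Lemma inv1 : iv E = E.
Proof. rewrite <- (nf_mul1r (iv E)). apply nf_mulVl, nf_one_neq0. Qed.
Lemma inv_uniq {a b : F} : b <> O -> a <*> b = E -> a = iv b.
Proof. intros Hb H. apply (mul_cancel_r Hb). rewrite H, nf_mulVl; auto. Qed.

Lemma mulN1r (a : F) : a <*> (<-> E) = <-> a.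
Proof.
  apply (@add_cancel_l a). rewrite <- (nf_mul1r a) at 1. rewrite <- nf_mulDr, addNr, addNr. apply mul0r.
Qed.
Lemma N1N1 : (<-> E) <*> (<-> E) = E.
Proof. rewrite mulN1r. apply (@add_cancel_l (<-> E)). rewrite nf_addN, addNr. auto. Qed.
Lemma sq1 {y : F} : y <*> y = E -> y = E \/ y = <-> E.
Proof.
  intro H. destruct (classic (y <+> E = O)) as [H0|H0].
  - right. apply (@add_cancel_r E). rewrite H0, nf_addN. auto.
  - left. apply (mul_cancel_r H0). rewrite nf_mulDr, H, nf_mul1r, nf_mul1l, nf_addC. auto.
Qed.
Lemma oppO : <-> O = O.
Proof. rewrite <- (add0r (<-> O)). apply nf_addN. Qed.
Lemma N1mul (x : F) : (<-> E) <*> x = <-> x.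
Proof.
  destruct (classic (x = O)) as [->|Hx]. rewrite mul0r, oppO; auto.
  assert (Hy : (iv x <*> (<-> E) <*> x) <*> (iv x <*> (<-> E) <*> x) = E).
  { rewrite !nf_mulA. rewrite <- (nf_mulA (iv x <*> (<-> E)) x (iv x)), nf_mulVr by auto.
    rewrite nf_mul1r, <- (nf_mulA (iv x)), N1N1, nf_mul1r. apply nf_mulVl; auto. }
  assert (Hx' : (<-> E) <*> x = x <*> (iv x <*> (<-> E) <*> x)).
  { rewrite !nf_mulA, nf_mulVr, nf_mul1l by auto. auto. }
  destruct (sq1 Hy) as [H1|H1]; rewrite Hx', H1.
  - rewrite nf_mul1r. rewrite H1 in Hx'. rewrite nf_mul1r in Hx'.
    rewrite <- (nf_mul1l x) in Hx' at 2. apply mul_cancel_r in Hx'; auto.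
    rewrite <- mulN1r, Hx', nf_mul1r. auto.
  - apply mulN1r.
Qed.

Lemma aut_inj f : mult_aut f -> forall x y : F, f x = f y -> x = y.
Proof. intros [[H _] _]; exact H. Qed.
Lemma aut_surj f : mult_aut f -> forall y : F, exists x, f x = y.
Proof. intros [[_ H] _]; exact H. Qed.
Lemma aut_mul f : mult_aut f -> forall x y : F, f (x <*> y) = f x <*> f y.
Proof. intros [_ [H _]]; exact H. Qed.
Lemma aut_one f : mult_aut f -> f E = E.
Proof. intros [_ [_ H]]; exact H. Qed.
Lemma aut0 f : mult_aut f -> f O = O.
Proof.
  intro Hf. destruct (aut_surj Hf O) as [z Hz].
  assert (H : f O = f (O <*> z)) by (rewrite mul0l; auto).
  rewrite H, (aut_mul Hf), Hz, mul0r; auto.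
Qed.
Lemma aut_neq0 f : mult_aut f -> forall x : F, x <> O -> f x <> O.
Proof. intros Hf x Hx H. apply Hx. apply (aut_inj Hf). rewrite H, aut0; auto. Qed.
Lemma aut_inv f : mult_aut f -> forall x : F, x <> O -> f (iv x) = iv (f x).
Proof.
  intros Hf x Hx. apply inv_uniq. apply aut_neq0; auto.
  rewrite <- aut_mul, nf_mulVl, aut_one; auto.
Qed.
Lemma aut_N1 f : mult_aut f -> f (<-> E) = <-> E.
Proof.
  intro Hf. assert (H : f (<-> E) <*> f (<-> E) = E) by (rewrite <- aut_mul, N1N1, aut_one; auto).
  destruct (sq1 H) as [H1|H1]; auto.
  assert (H2 : <-> E = E) by (apply (aut_inj Hf); rewrite H1, aut_one; auto). rewrite H1, H2; auto.
Qed.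
Lemma aut_comp (f g : F -> F) : mult_aut f -> mult_aut g -> mult_aut (fun x => f (g x)).
Proof.
  intros Hf Hg. split; [split|split].
  - intros x y H. apply (aut_inj Hg), (aut_inj Hf), H.
  - intro y. destruct (aut_surj Hf y) as [z <-]. destruct (aut_surj Hg z) as [w <-]. eauto.
  - intros a b. rewrite (aut_mul Hg), (aut_mul Hf). auto.
  - rewrite (aut_one Hg), (aut_one Hf); auto.
Qed.

Lemma finv_spec (f : F -> F) y : (exists x, f x = y) -> f (finv f y) = y.
Proof. intro H. unfold finv. apply (epsilon_spec (inhabits O) (fun x => f x = y) H). Qed.
Lemma finv_eq (f : F -> F) x y : (forall a b, f a = f b -> a = b) -> f x = y -> finv f y = x.
Proof. intros Hi H. apply Hi. rewrite finv_spec; eauto. Qed.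

End NFBasics.
Section Fsr.
Variable F : nearField.
Variable I : Type.
Variables sigma rho : I -> F -> F.
Hypothesis Hs : forall i, mult_aut (sigma i).
Hypothesis Hr : forall i, mult_aut (rho i).
Notation "a <+> b" := (@nf_add F a b) (at level 50, left associativity).
Notation "a <*> b" := (@nf_mul F a b) (at level 40, left associativity).
Notation "'O'" := (@nf_zero F).
Notation "'E'" := (@nf_one F).
Notation "<-> a" := (@nf_opp F a) (at level 35).
Notation iv := (@nf_inv F).
Notation th i := (fun y => sigma i (rho i y)).
Notation vadd := (Fsr_add sigma).
Notation smul := (Fsr_smul rho).
Notation vzero := (@Fsr_zero F I).
Notation Eq3 k p q r := (sigma k (rho k p) <+> sigma k (rho k q) = sigma k (rho k r)).

Lemma aut_th i : mult_aut (th i).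
Proof. apply aut_comp; auto. Qed.

Lemma sig_add u v i : sigma i (vadd u v i) = sigma i (u i) <+> sigma i (v i).
Proof. unfold Fsr_add, add_tau. apply finv_spec, aut_surj, Hs. Qed.
Lemma sig_smul c u i : sigma i (smul c u i) = sigma i (rho i c) <*> sigma i (u i).
Proof. unfold Fsr_smul. apply aut_mul, Hs. Qed.
Lemma sig_smulX a u i X : rho i X = u i -> sigma i (smul a u i) = sigma i (rho i (a <*> X)).
Proof. intro H. unfold Fsr_smul. rewrite <- H, <- (aut_mul (Hr i)). auto. Qed.
Lemma sig_zero i : sigma i (vzero i) = O.
Proof. apply aut0, Hs. Qed.
Lemma vec_ext (u v : I -> F) : (forall i, sigma i (u i) = sigma i (v i)) -> u = v.
Proof. intro H. extensionality i. apply (aut_inj (Hs i)), H. Qed.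
Lemma vec_neq0 (u : I -> F) : u <> vzero -> exists i, u i <> O.
Proof.
  intro H. apply NNPP. intro H'. apply H. extensionality i. apply NNPP. intro H2. apply H'. eauto.
Qed.

Lemma add4 (a b c d : F) : (a <+> b) <+> (c <+> d) = (a <+> c) <+> (b <+> d).
Proof.
  rewrite <- !nf_addA. f_equal. rewrite !nf_addA. f_equal. apply nf_addC.
Qed.

Lemma L1 {k p q r} s : Eq3 k p q r -> Eq3 k (s <*> p) (s <*> q) (s <*> r).
Proof.
  intro H. rewrite !(aut_mul (aut_th k)). rewrite <- nf_mulDr, H. auto.
Qed.

Lemma nfaut_add (f : F -> F) : nf_aut f -> forall a b, f (a <+> b) = f a <+> f b.
Proof. intros [_ [H _]]; exact H. Qed.
Lemma nfaut_inj (f : F -> F) : nf_aut f -> forall a b, f a = f b -> a = b.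
Proof. intros [[H _] _]; exact H. Qed.

Lemma approx_eval k t g y :
  sigma k (rho k (phi g (finv (th t) (sigma t (rho t y))))) = sigma k (rho k (iv g <*> y <*> g)).
Proof.
  unfold phi. assert (H : finv (th t) (sigma t (rho t y)) = y).
  { apply finv_eq; auto. apply (aut_inj (aut_th t)). }
  rewrite H. auto.
Qed.

Lemma L2 {k t g p q r} : g <> O ->
  nf_aut (fun x => sigma k (rho k (phi g (finv (th t) x)))) ->
  Eq3 t p q r -> Eq3 k (iv g <*> p <*> g) (iv g <*> q <*> g) (iv g <*> r <*> g).
Proof.
  intros Hg Hf H. rewrite <- !(approx_eval k t g). rewrite <- H.
  symmetry. apply (nfaut_add Hf).
Qed.

Lemma L3 {k t g p q r} : g <> O ->
  nf_aut (fun x => sigma k (rho k (phi g (finv (th t) x)))) ->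
  Eq3 k p q r -> Eq3 t (g <*> p <*> iv g) (g <*> q <*> iv g) (g <*> r <*> iv g).
Proof.
  intros Hg Hf H. apply (nfaut_inj Hf). rewrite (nfaut_add Hf). rewrite !approx_eval.
  assert (Hc : forall z, iv g <*> (g <*> z <*> iv g) <*> g = z).
  { intro z. rewrite !nf_mulA, nf_mulVl, nf_mul1l by auto.
    rewrite <- nf_mulA, nf_mulVl, nf_mul1r by auto. auto. }
  rewrite !Hc. exact H.
Qed.

Lemma Etrans i j t : approx sigma rho i t -> approx sigma rho j t ->
  exists d, d <> O /\ forall p q r, Eq3 i p q r -> Eq3 j (p <*> d) (q <*> d) (r <*> d).
Proof.
  intros [g1 [Hg1 Hf1]] [g2 [Hg2 Hf2]].
  exists (iv g1 <*> g2). split.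
  { apply nf_mul_neq0; auto. apply nf_inv_neq0; auto. }
  intros p q r H.
  apply (L3 Hg1 Hf1) in H. apply (L1 (iv g1)) in H.
  assert (Hc : forall z, iv g1 <*> (g1 <*> z <*> iv g1) = z <*> iv g1).
  { intro z. rewrite !nf_mulA, nf_mulVl, nf_mul1l by auto. auto. }
  rewrite !Hc in H.
  apply (L2 Hg2 Hf2) in H. apply (L1 g2) in H.
  assert (Hc2 : forall z, g2 <*> (iv g2 <*> (z <*> iv g1) <*> g2) = z <*> (iv g1 <*> g2)).
  { intro z. rewrite !nf_mulA, nf_mulVr, nf_mul1l by auto. auto. }
  rewrite !Hc2 in H. exact H.
Qed.


Definition QK' (u : I -> F) := forall a b, exists c, vadd (smul a u) (smul b u) = smul c u.
Definition inW t (v : I -> F) := Fsr_car v /\ forall i, ~ approx sigma rho i t -> v i = O.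

Lemma Q_coord {u a b c i X} : rho i X = u i -> vadd (smul a u) (smul b u) = smul c u ->
  Eq3 i (a <*> X) (b <*> X) (c <*> X).
Proof.
  intros HX H. apply (f_equal (fun w => sigma i (w i))) in H.
  rewrite sig_add, !(sig_smulX _ _ HX) in H. exact H.
Qed.

Lemma rho_pre {i x} : x <> O -> exists X, X <> O /\ rho i X = x.
Proof.
  intro Hx. destruct (aut_surj (Hr i) x) as [X HX]. exists X. split; auto.
  intro H0. subst. apply Hx. apply aut0, Hr.
Qed.

Lemma Qsum u v l : QK' u -> QK' v ->
  (forall a b c, vadd (smul a u) (smul b u) = smul c u ->
     vadd (smul (a <*> l) v) (smul (b <*> l) v) = smul (c <*> l) v) ->
  QK' (vadd u (smul l v)).
Proof.
  intros Hu Hv Hl a b. destruct (Hu a b) as [c Hc]. exists c.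
  pose proof (Hl a b c Hc) as Hl'. apply vec_ext; intro i.
  apply (f_equal (fun w => sigma i (w i))) in Hc.
  apply (f_equal (fun w => sigma i (w i))) in Hl'.
  rewrite sig_add, !sig_smul in Hc, Hl'. rewrite !sig_smul, sig_add, !sig_smul in *.
  rewrite sig_add, sig_smul.
  rewrite !(aut_mul (aut_th i)) in Hl'.
  rewrite !nf_mulDr, add4, Hc, !nf_mulA, Hl'. auto.
Qed.

Lemma coord_zero_add u v i : u i = O -> v i = O -> vadd u v i = O.
Proof.
  intros H1 H2. apply (aut_inj (Hs i)). rewrite sig_add, H1, H2, !(aut0 (Hs i)), nf_add0. auto.
Qed.
Lemma coord_zero_smul c u i : u i = O -> smul c u i = O.
Proof. intro H. unfold Fsr_smul. rewrite H. apply mul0r. Qed.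

Lemma car_add u v : Fsr_car u -> Fsr_car v -> Fsr_car (vadd u v).
Proof.
  intros [s1 H1] [s2 H2]. exists (s1 ++ s2). intros j Hj. apply in_or_app.
  destruct (classic (u j = O)); [destruct (classic (v j = O))|].
  - exfalso. apply Hj. apply coord_zero_add; auto.
  - right; auto.
  - left; auto.
Qed.
Lemma car_smul c u : Fsr_car u -> Fsr_car (smul c u).
Proof.
  intros [s1 H1]. exists s1. intros j Hj. apply H1. intro H. apply Hj, coord_zero_smul, H.
Qed.
Lemma inW_add t u v : inW t u -> inW t v -> inW t (vadd u v).
Proof.
  intros [H1 H2] [H3 H4]. split. apply car_add; auto. intros i Hi. apply coord_zero_add; auto.
Qed.
Lemma inW_smul t c u : inW t u -> inW t (smul c u).
Proof.
  intros [H1 H2]. split. apply car_smul; auto. intros i Hi. apply coord_zero_smul; auto.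
Qed.

Lemma regular_W t : regular vadd vzero smul (inW t).
Proof.
  intros u v [Wu Qu] Hu0 [Wv Qv] Hv0.
  split; [split; auto|]. split; auto. split; [split; auto|]. split; auto.
  destruct (vec_neq0 Hu0) as [i Hi]. destruct (vec_neq0 Hv0) as [j Hj].
  assert (Ai : approx sigma rho i t) by (apply NNPP; intro H; apply Hi, (proj2 Wu), H).
  assert (Aj : approx sigma rho j t) by (apply NNPP; intro H; apply Hj, (proj2 Wv), H).
  destruct (Etrans Ai Aj) as [d [Hd Hdt]].
  destruct (rho_pre (i:=i) Hi) as [X [HX0 HX]]. destruct (rho_pre (i:=j) Hj) as [Y [HY0 HY]].
  exists (X <*> d <*> iv Y). split.
  { apply nf_mul_neq0; [apply nf_mul_neq0|apply nf_inv_neq0]; auto. }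
  split. { apply inW_add; auto. apply inW_smul; auto. }
  apply Qsum; auto.
  intros a b c Hc.
  pose proof (Q_coord HX Hc) as E1. apply Hdt in E1.
  destruct (Qv (a <*> (X <*> d <*> iv Y)) (b <*> (X <*> d <*> iv Y))) as [c' Hc'].
  pose proof (Q_coord HY Hc') as E2.
  assert (Hz : forall z, z <*> (X <*> d <*> iv Y) <*> Y = z <*> X <*> d).
  { intro z. rewrite <- !nf_mulA, nf_mulVl, nf_mul1r by auto. auto. }
  rewrite !Hz in E2. rewrite E1 in E2.
  assert (Hcc : c' = c <*> (X <*> d <*> iv Y)).
  { apply (@mul_cancel_r F Y); auto. rewrite Hz. apply (aut_inj (aut_th j)). auto. }
  rewrite Hcc in Hc'. exact Hc'.
Qed.

Lemma nf_aut_id : nf_aut (fun x : F => x).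
Proof. split; [split|split]; eauto. Qed.

Lemma th_finv t x : sigma t (rho t (finv (th t) x)) = x.
Proof. exact (@finv_spec F (th t) x (aut_surj (aut_th t) x)). Qed.
Lemma finv_th t y : finv (th t) (sigma t (rho t y)) = y.
Proof. apply finv_eq; auto. apply (aut_inj (aut_th t)). Qed.

Lemma approx_refl t : approx sigma rho t t.
Proof.
  exists E. split. apply nf_one_neq0.
  assert (H : (fun x => sigma t (rho t (phi E (finv (th t) x)))) = (fun x => x)).
  { extensionality x. unfold phi. rewrite inv1, nf_mul1l, nf_mul1r. apply th_finv. }
  rewrite H. apply nf_aut_id.
Qed.

Lemma Q_approx u k t : QK' u -> u t <> O -> u k <> O -> approx sigma rho k t.
Proof.
  intros Qu Ht Hk.
  destruct (rho_pre (i:=t) Ht) as [Xt [HXt0 HXt]]. destruct (rho_pre (i:=k) Hk) as [Xk [HXk0 HXk]].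
  assert (Hg : iv Xt <*> Xk <> O) by (apply nf_mul_neq0; auto; apply nf_inv_neq0; auto).
  exists (iv Xt <*> Xk). split; auto.
  set (g := iv Xt <*> Xk) in *.
  assert (Hphi_inj : forall a b, phi g a = phi g b -> a = b).
  { unfold phi. intros a b H. apply (@mul_cancel_r F g) in H; auto.
    apply (@mul_cancel_l F (iv g)) in H; auto. apply nf_inv_neq0; auto. }
  assert (HP : forall x y, finv (th t) (x <*> y) = finv (th t) x <*> finv (th t) y).
  { intros x y. apply finv_eq. apply (aut_inj (aut_th t)).
    rewrite (aut_mul (aut_th t)), !th_finv. auto. }
  split; [split|split].
  - intros x y H. apply (aut_inj (aut_th k)) in H. apply Hphi_inj in H.
    rewrite <- (th_finv t x), <- (th_finv t y), H. auto.
  - intro y. destruct (aut_surj (aut_th k) y) as [Z HZ].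
    exists (sigma t (rho t (g <*> Z <*> iv g))). rewrite finv_th. unfold phi.
    rewrite <- HZ. f_equal. f_equal.
    rewrite !nf_mulA, nf_mulVl, nf_mul1l by auto. rewrite <- nf_mulA, nf_mulVl, nf_mul1r by auto. auto.
  - intros x y.
    set (p := finv (th t) x). set (q := finv (th t) y).
    destruct (Qu (p <*> iv Xt) (q <*> iv Xt)) as [c Hc].
    pose proof (Q_coord HXt Hc) as Et. pose proof (Q_coord HXk Hc) as Ek.
    assert (Hs1 : forall z, z <*> iv Xt <*> Xt = z).
    { intro z. rewrite <- nf_mulA, nf_mulVl, nf_mul1r; auto. }
    rewrite !Hs1 in Et. unfold p, q in Et. rewrite !th_finv in Et.
    rewrite Et, finv_th.
    apply (L1 (iv g)) in Ek.
    assert (Hs2 : forall z, iv g <*> (z <*> iv Xt <*> Xk) = phi g z).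
    { intro z. unfold phi, g. rewrite !nf_mulA. auto. }
    rewrite !Hs2 in Ek. fold p q. rewrite Ek. f_equal. f_equal. unfold phi, g.
    rewrite !nf_mulA. f_equal. rewrite <- !nf_mulA, nf_mulVr, nf_mul1r; auto.
  - intros x y. rewrite HP. unfold phi.
    rewrite <- (aut_mul (aut_th k)). f_equal.
    rewrite !nf_mulA. f_equal. rewrite <- !nf_mulA. f_equal. f_equal.
    rewrite !nf_mulA, nf_mulVr, nf_mul1l; auto.
Qed.

Lemma sig_neg v i : sigma i (smul (<-> E) v i) = <-> sigma i (v i).
Proof. rewrite sig_smul, (aut_N1 (aut_th i)), N1mul. auto. Qed.

Definition dec (x y : I) : {x = y} + {x <> y} := excluded_middle_informative (x = y).

Lemma reduce (W : (I -> F) -> Prop) :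
  (forall u v, W u -> W v -> W (vadd u v)) -> (forall c u, W u -> W (smul c u)) ->
  forall n s v, length s <= n -> W v -> (forall j, v j <> O -> In j s) -> v <> vzero ->
  exists w, W w /\ QK' w /\ w <> vzero /\ forall j, w j <> O -> v j <> O.
Proof.
  intros Hadd Hsm n. induction n as [|n IH]; intros s v Hl Wv Hs0 Hv0.
  - destruct (vec_neq0 Hv0) as [j Hj]. apply Hs0 in Hj. destruct s; simpl in *; [contradiction|lia].
  - destruct (classic (QK' v)) as [Qv|Qv].
    { exists v. auto. }
    unfold QK' in Qv. apply not_all_ex_not in Qv. destruct Qv as [a Qv].
    apply not_all_ex_not in Qv. destruct Qv as [b Qv].
    destruct (vec_neq0 Hv0) as [k Hk].
    destruct (rho_pre (i:=k) Hk) as [X [HX0 HX]].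
    destruct (aut_surj (aut_th k) (sigma k (rho k (a <*> X)) <+> sigma k (rho k (b <*> X)))) as [Z HZ].
    set (c := Z <*> iv X).
    assert (Hc : sigma k (rho k (c <*> X)) = sigma k (rho k (a <*> X)) <+> sigma k (rho k (b <*> X))).
    { unfold c. rewrite <- nf_mulA, nf_mulVl, nf_mul1r; auto. }
    set (w := vadd (vadd (smul a v) (smul b v)) (smul (<-> E) (smul c v))).
    assert (Ww : W w) by (unfold w; auto).
    assert (Hwk : w k = O).
    { apply (aut_inj (Hs k)). unfold w. rewrite sig_add, sig_neg, sig_add, !(sig_smulX _ _ HX), Hc.
      rewrite addNr, (aut0 (Hs k)). auto. }
    assert (Hsupp : forall j, w j <> O -> v j <> O).
    { intros j Hj Hvj. apply Hj. unfold w. apply coord_zero_add; [apply coord_zero_add|];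
      repeat apply coord_zero_smul; auto. }
    assert (Hw0 : w <> vzero).
    { intro H0. apply Qv. exists c. apply vec_ext. intro j.
      apply (f_equal (fun z => sigma j (z j))) in H0. unfold w in H0.
      rewrite sig_add, sig_neg, sig_zero in H0.
      apply (@add_cancel_r F (<-> sigma j (smul c v j))). rewrite H0, addNr. auto. }
    destruct (IH (remove dec k s) w) as [w' [Ww' [Qw' [Hw'0 Hw']]]]; auto.
    + pose proof (remove_length_lt dec s k (Hs0 k Hk)). lia.
    + intros j Hj. apply in_in_remove. intro; subst; contradiction. apply Hs0, Hsupp, Hj.
    + exists w'. repeat split; auto.
Qed.

Definition unit_t (t : I) : I -> F := fun i => if excluded_middle_informative (i = t) then E else O.

Lemma unit_inW t : inW t (unit_t t).
Proof.
  split.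
  - exists [t]. intros j Hj. unfold unit_t in Hj. destruct (excluded_middle_informative (j = t)).
    subst; simpl; auto. contradiction.
  - intros i Hi. unfold unit_t. destruct (excluded_middle_informative (i = t)); auto.
    subst. exfalso. apply Hi, approx_refl.
Qed.

Lemma unit_QK t : QK' (unit_t t).
Proof.
  intros a b. destruct (aut_surj (aut_th t) (sigma t (rho t a) <+> sigma t (rho t b))) as [c Hc].
  exists c. apply vec_ext. intro i. rewrite sig_add, !sig_smul. unfold unit_t.
  destruct (excluded_middle_informative (i = t)).
  - subst. rewrite (aut_one (Hs t)), !nf_mul1r. auto.
  - rewrite (aut0 (Hs i)), !mul0r, nf_add0. auto.
Qed.

Lemma unit_neq0 t : unit_t t <> vzero.
Proof.
  intro H. apply (f_equal (fun v => v t)) in H. unfold unit_t, Fsr_zero in H.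
  destruct (excluded_middle_informative (t = t)). apply nf_one_neq0 in H; auto. auto.
Qed.

Lemma subspace_W t : subspace vadd smul (@Fsr_car F I) (inW t).
Proof.
  split. intros v [H _]; auto.
  split. exists vzero. split. exists []. intros j Hj. contradiction. auto.
  split. apply inW_add. intros; apply inW_smul; auto.
Qed.

Lemma maximal_W t : maximal_regular_subspace vadd vzero smul (@Fsr_car F I) (inW t).
Proof.
  split. apply subspace_W. split. apply regular_W.
  intros W' [HW'c [_ [HW'a HW's]]] RW' Hsub v Wv.
  split. apply HW'c; auto.
  intros i Hi. apply NNPP. intro Hvi.
  set (m := fun j => if excluded_middle_informative (approx sigma rho j t)
                     then finv (sigma j) (<-> sigma j (v j)) else O).
  assert (Hsm : forall j, approx sigma rho j t -> sigma j (m j) = <-> sigma j (v j)).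
  { intros j Hj. unfold m. destruct (excluded_middle_informative (approx sigma rho j t)); [|contradiction].
    apply finv_spec, aut_surj, Hs. }
  assert (Hm0 : forall j, ~ approx sigma rho j t -> m j = O).
  { intros j Hj. unfold m. destruct (excluded_middle_informative (approx sigma rho j t)); auto; contradiction. }
  destruct (HW'c v Wv) as [s Hs1].
  assert (Wm : inW t m).
  { split; auto. exists s. intros j Hj. apply Hs1. intro H0. apply Hj.
    destruct (classic (approx sigma rho j t)) as [A|A]; [|apply Hm0; auto].
    apply (aut_inj (Hs j)). rewrite Hsm, H0, (aut0 (Hs j)), oppO; auto. }
  set (v2 := vadd v m).
  assert (Wv2 : W' v2) by (apply HW'a; auto).
  assert (Hv2a : forall j, approx sigma rho j t -> v2 j = O).
  { intros j Hj. apply (aut_inj (Hs j)). unfold v2. rewrite sig_add, Hsm, addNr, (aut0 (Hs j)); auto. }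
  assert (Hv2b : forall j, ~ approx sigma rho j t -> v2 j = v j).
  { intros j Hj. apply (aut_inj (Hs j)). unfold v2. rewrite sig_add, Hm0, (aut0 (Hs j)), add0r; auto. }
  assert (Hv20 : v2 <> vzero).
  { intro H0. apply Hvi. rewrite <- Hv2b; auto. rewrite H0. auto. }
  destruct (car_add (HW'c v Wv) (proj1 Wm)) as [s2 Hs2].
  destruct (@reduce W' HW'a HW's (length s2) s2 v2 (le_n _) Wv2 Hs2 Hv20) as [w [Ww [Qw [Hw0 Hw]]]].
  assert (Hwa : forall j, w j <> O -> ~ approx sigma rho j t).
  { intros j Hj A. apply (Hw j Hj), Hv2a, A. }
  assert (Qe : quasi_kernel vadd smul W' (unit_t t)).
  { split. apply Hsub, unit_inW. apply unit_QK. }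
  destruct (RW' (unit_t t) w Qe (@unit_neq0 t) (conj Ww Qw) Hw0) as [_ [_ [_ [_ [l [Hl0 [_ Qz]]]]]]].
  destruct (vec_neq0 Hw0) as [k Hk].
  assert (Hwt : w t = O).
  { apply NNPP. intro H. apply (Hwa t H), approx_refl. }
  apply (Hwa k Hk). apply (@Q_approx _ k t Qz).
  - intro H0. apply (f_equal (sigma t)) in H0. rewrite sig_add, sig_smul, Hwt, (aut0 (Hs t)), mul0r, add0r in H0.
    unfold unit_t in H0. destruct (excluded_middle_informative (t = t)); [|auto].
    rewrite (aut_one (Hs t)) in H0. exact (nf_one_neq0 H0).
  - intro H0. apply (f_equal (sigma k)) in H0. rewrite sig_add, sig_smul, (aut0 (Hs k)) in H0.
    assert (Hek : unit_t t k = O).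
    { unfold unit_t. destruct (excluded_middle_informative (k = t)); auto. subst. exfalso. apply (Hwa t Hk), approx_refl. }
    rewrite Hek, (aut0 (Hs k)), nf_add0 in H0.
    apply mul_eq0 in H0. destruct H0 as [H0|H0].
    + apply (aut_neq0 (aut_th k) Hl0), H0.
    + apply (aut_neq0 (Hs k) Hk), H0.
Qed.

Fixpoint sublist t (s : list I) : list {i : I | approx sigma rho i t} :=
  match s with
  | [] => []
  | x :: s' => match excluded_middle_informative (approx sigma rho x t) with
               | left h => exist _ x h :: sublist t s'
               | right _ => sublist t s'
               end
  end.

Lemma sublist_in t s i (h : approx sigma rho i t) : In i s -> In (exist _ i h) (sublist t s).
Proof.
  induction s as [|x s IH]; simpl; [contradiction|]. intros [H|H].
  - subst. destruct (excluded_middle_informative (approx sigma rho i t)) as [h'|n].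
    + left. f_equal. apply proof_irrelevance.
    + contradiction.
  - destruct (excluded_middle_informative (approx sigma rho x t)); [right|]; auto.
Qed.

Lemma Psi_image_iff t v : Psi_image sigma rho t v <-> inW t v.
Proof.
  split.
  - intros [a [[s Hs0] ->]]. split.
    + exists (map (@proj1_sig _ _) s). intros j Hj. unfold Psi in Hj.
      destruct (excluded_middle_informative (approx sigma rho j t)) as [h|n]; [|contradiction].
      apply Hs0 in Hj. apply (in_map (@proj1_sig _ _)) in Hj. exact Hj.
    + intros i Hi. unfold Psi. destruct (excluded_middle_informative (approx sigma rho i t)); auto; contradiction.
  - intros [[s Hs0] Hz]. exists (fun p => v (proj1_sig p)). split.
    + exists (sublist t s). intros [j h] Hj. simpl in Hj. apply sublist_in, Hs0, Hj.
    + extensionality i. unfold Psi. destruct (excluded_middle_informative (approx sigma rho i t)); simpl; auto.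
Qed.

Lemma vsum_coord ws i : sigma i (vsum vadd vzero ws i) = fold_right (@nf_add F) O (map (fun w => sigma i (w i)) ws).
Proof.
  induction ws as [|w ws IH].
  - apply sig_zero.
  - change (vsum vadd vzero (w :: ws)) with (vadd w (vsum vadd vzero ws)).
    rewrite sig_add, IH. auto.
Qed.

Lemma sum_zero {A} (l : list A) (g : A -> F) : (forall x, In x l -> g x = O) -> fold_right (@nf_add F) O (map g l) = O.
Proof.
  induction l as [|x l IH]; simpl; auto. intro H. rewrite H, IH; auto. apply nf_add0.
Qed.

Lemma sum_single {A} (l : list A) (g : A -> F) x0 : NoDup l -> In x0 l ->
  (forall x, In x l -> x <> x0 -> g x = O) -> fold_right (@nf_add F) O (map g l) = g x0.
Proof.
  induction l as [|x l IH]; simpl; [contradiction|]. intros Hnd Hin H.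
  inversion Hnd; subst. destruct Hin as [Hx|Hx].
  - subst. rewrite sum_zero, add0r; auto. intros y Hy. apply H; auto. intro; subst; contradiction.
  - rewrite IH; auto. rewrite H; auto. apply nf_add0. intro; subst; contradiction.
Qed.

Lemma fst_inj {A B} (l : list (A * B)) p q : NoDup (map fst l) -> In p l -> In q l -> fst p = fst q -> p = q.
Proof.
  induction l as [|x l IH]; simpl; [contradiction|]. intros Hnd Hp Hq He.
  inversion Hnd; subst. destruct Hp as [Hp|Hp]; destruct Hq as [Hq|Hq]; subst; auto.
  - exfalso. apply H1. rewrite He. apply in_map; auto.
  - exfalso. apply H1. rewrite <- He. apply in_map; auto.
Qed.

Definition restr t (v : I -> F) : I -> F :=
  fun i => if excluded_middle_informative (approx sigma rho i t) then v i else O.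

Lemma ids (Tset : I -> Prop) (HT : full_set_of_reps (approx sigma rho) Tset) :
  internal_direct_sum vadd vzero Tset inW (@Fsr_car F I).
Proof.
  assert (U : forall i t1 t2, Tset t1 -> approx sigma rho i t1 -> Tset t2 -> approx sigma rho i t2 -> t1 = t2).
  { intros i t1 t2 H1 H2 H3 H4. destruct (HT i) as [t [_ Ut]]. rewrite (Ut t1), (Ut t2); auto. }
  split; [intro v; split|].
  - intros [s Hs0].
    set (r := fun i => epsilon (inhabits i) (fun t => Tset t /\ approx sigma rho i t)).
    assert (Hr' : forall i, Tset (r i) /\ approx sigma rho i (r i)).
    { intro i. unfold r. apply (epsilon_spec (inhabits i) (fun t => Tset t /\ approx sigma rho i t)).
      destruct (HT i) as [t [Ht _]]. eauto. }
    set (ts := nodup dec (map r s)).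
    exists (map (fun t => (t, restr t v)) ts).
    assert (Hts : forall t, In t ts -> Tset t).
    { intros t Ht. unfold ts in Ht. apply nodup_In, in_map_iff in Ht. destruct Ht as [i [<- _]]. apply Hr'. }
    split; [|split].
    + rewrite map_map. simpl. rewrite map_id. apply NoDup_nodup.
    + apply Forall_forall. intros p Hp. apply in_map_iff in Hp. destruct Hp as [t [<- Ht]]. simpl.
      split; auto. split.
      * exists s. intros j Hj. apply Hs0. intro H0. apply Hj. unfold restr.
        destruct (excluded_middle_informative (approx sigma rho j t)); auto.
      * intros i Hi. unfold restr. destruct (excluded_middle_informative (approx sigma rho i t)); auto; contradiction.
    + apply vec_ext. intro i. rewrite vsum_coord, !map_map. simpl.
      destruct (classic (v i = O)) as [H0|H0].
      * rewrite sum_zero. rewrite H0; apply aut0, Hs.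
        intros t _. unfold restr. destruct (excluded_middle_informative (approx sigma rho i t)); [rewrite H0|]; apply aut0, Hs.
      * rewrite (@sum_single _ _ _ (r i)).
        -- unfold restr. destruct (excluded_middle_informative (approx sigma rho i (r i))); auto.
           exfalso. apply n, Hr'.
        -- apply NoDup_nodup.
        -- unfold ts. apply nodup_In, in_map, Hs0, H0.
        -- intros t Ht Hne. unfold restr. destruct (excluded_middle_informative (approx sigma rho i t)).
           ++ exfalso. apply Hne. apply (U i); auto. apply Hr'. apply Hr'.
           ++ apply aut0, Hs.
  - intros [l [_ [Hf ->]]]. induction l as [|p l IH].
    + exists []. intros j Hj. apply Hj. auto.
    + inversion Hf; subst. simpl. apply car_add; auto. apply (proj1 (proj2 H1)).
  - intros l Hnd Hf Hsum. apply Forall_forall. intros p Hp.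
    rewrite Forall_forall in Hf.
    apply vec_ext. intro i. rewrite sig_zero.
    destruct (Hf p Hp) as [Tp [_ Wp]].
    destruct (classic (approx sigma rho i (fst p))) as [A|A].
    + apply (f_equal (fun w => sigma i (w i))) in Hsum. rewrite vsum_coord, sig_zero, map_map in Hsum.
      rewrite (@sum_single _ _ _ p) in Hsum; auto.
      * apply NoDup_map_inv in Hnd. auto.
      * intros q Hq Hne. destruct (classic (snd q i = O)) as [Z|Z].
        -- rewrite Z. apply aut0, Hs.
        -- exfalso. apply Hne. destruct (Hf q Hq) as [Tq [_ Wq]].
           apply (fst_inj l q p Hnd); auto. apply (U i); auto. apply NNPP. intro N. apply Z, Wq, N.
    + rewrite Wp; auto. apply aut0, Hs.
Qed.

End Fsr.

Theorem mainTheorem8 (F : nearField) (I : Type) (sigma rho : I -> F -> F)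
  (Hsigma : forall i, mult_aut (sigma i)) (Hrho : forall i, mult_aut (rho i))
  (Tset : I -> Prop) (HT : full_set_of_reps (approx sigma rho) Tset) :
  regular_decomposition_family (Fsr_add sigma) (@Fsr_zero F I) (Fsr_smul rho)
    Tset (Psi_image sigma rho) (@Fsr_car F I).
Proof.
  assert (HP : Psi_image sigma rho = @inW F I sigma rho).
  { extensionality t. extensionality v. apply propositional_extensionality. apply Psi_image_iff; auto. }
  rewrite HP. split.
  - apply ids; auto.
  - intros t _. apply maximal_W; auto.
Qed.
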